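(* Let $N=\{1,\dots,n\}$, $\eta>0$, integers $B\ge1$, $Q\ge1$. Let $(A(k))_{k\ge0}$ be $n\times n$ matrices, let $x(0)\in\mathbb{R}^n$ have every component a multiple of $1/Q$, not all components equal, and define componentwise $x_i(k+1)=\lfloor\sum_{j=1}^n a_{ij}(k)x_j(k)\rfloor$, where $\lfloor\cdot\rfloor$ denotes rounding down to the nearest multiple of $1/Q$. Assume: (i) for every $k$, $A(k)$ is doubly stochastic with positive diagonal entries and every positive entry of $A(k)$ is at least $\eta$; (ii) for every integer $k\ge 0$, every permutation $\sigma$ of $N$ with $x_{\sigma(1)}(kB)\ge\cdots\ge x_{\sigma(n)}(kB)$, and every $d\in\{1,\dots,n-1\}$, either $x_{\sigma(d)}(kB)=x_{\sigma(d+1)}(kB)$, or there exist $t\in\{kB,\dots,(k+1)B-1\}$, $i\in\{\sigma(1),\dots,\sigma(d)\}$, $j\in\{\sigma(d+1),\dots,\sigma(n)\}$ such that $(i,j)$ or $(j,i)$ belongs to $\mathcal{E}(A(t))$. Then all $x_i(k)$ converge to a common limit $x_f$, and there is an absolute constant $c$ such that \[\Big|x_f-\frac1n\sum_{i=1}^n x_i(0)\Big|\le \frac{c}{Q}\,\frac{n^2}{\eta}\,B\log\big(Qn(U-L)\big),\] where $U=\max_i x_i(0)$ and $L=\min_i x_i(0)$.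
   Context: A matrix is doubly stochastic if it is nonnegative with all row and column sums equal to $1$. For a matrix $A=[a_{ij}]$, $\mathcal{E}(A)$ is the set of directed edges $(j,i)$ (including self-edges) with $a_{ij}>0$. *)

(* Defs.v *)
From HB Require Import structures.
From mathcomp Require Import all_boot all_order all_algebra perm.
From mathcomp Require Import all_classical all_reals all_analysis.
From mathcomp Require Import Rstruct Rstruct_topology.
From Stdlib Require Rdefinitions.
Notation R := Rdefinitions.R.
Set Implicit Arguments. Unset Strict Implicit. Unset Printing Implicit Defensive.
Import Order.TTheory GRing.Theory Num.Theory.
Local Open Scope ring_scope.

Definition doubly_stochastic (n : nat) (A : 'M[R]_n) : Prop :=
  (forall i j, 0 <= A i j) /\
  (forall i, \sum_(j < n) A i j = 1) /\
  (forall j, \sum_(i < n) A i j = 1).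

Definition in_edges (n : nat) (A : 'M[R]_n) (j i : 'I_n) : Prop := 0 < A i j.

Definition rdown (Q : nat) (y : R) : R := (Num.floor (Q%:R * y))%:~R / Q%:R.

(* Main.v *)
Require Import Defs.
From HB Require Import structures.
From mathcomp Require Import all_boot all_order all_algebra perm.
From mathcomp Require Import all_classical all_reals all_analysis.
From mathcomp Require Import Rstruct Rstruct_topology.
From mathcomp Require Import ring lra.
Import Order.TTheory GRing.Theory Num.Theory.
Local Open Scope classical_set_scope.
Local Open Scope ring_scope.
Lemma eqle (a b : R) : a = b -> a <= b.
Proof. by move->. Qed.

Lemma sort_perm m (f : 'I_m -> R) :
  exists s : {perm 'I_m}, forall a b : 'I_m, (a <= b)%N -> f (s b) <= f (s a).
Proof.
case: m f => [|m] f; first by exists 1%g => [[]].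
pose leT := fun i j : 'I_m.+1 => f j <= f i.
pose r := sort leT (enum 'I_m.+1).
have tot : total leT by move=> i j; rewrite /leT le_total.
have tr : transitive leT by move=> j i k; rewrite /leT => h1 h2; apply: le_trans h2 h1.
have sz : size r = m.+1 by rewrite size_sort size_enum_ord.
have un : uniq r by rewrite sort_uniq enum_uniq.
pose g := fun a : 'I_m.+1 => nth ord0 r a.
have ginj : injective g.
  by move=> a b /eqP; rewrite /g nth_uniq ?sz // => /eqP /val_inj.
exists (perm ginj) => a b ab; rewrite !permE /g.
have := sorted_leq_nth tr (fun i => le_refl (f i)) ord0 (sort_sorted tot (enum 'I_m.+1)).
by move=> /(_ a b); apply; rewrite ?inE ?sz.
Qed.

Lemma tele_bound m (v : nat -> R) lo hi :
  (forall k, (k < m)%N -> v k.+1 <= v k) -> lo <= hi ->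
  \sum_(a < m | (lo <= v a.+1) && (v a <= hi)) (v a - v a.+1) <= hi - lo.
Proof.
move=> mono lohi.
suff H : forall k, (k <= m)%N ->
  \sum_(a < k | (lo <= v a.+1) && (v a <= hi)) (v a - v a.+1)
    <= Num.max 0 (hi - Num.max lo (v k)).
  apply: le_trans (H m (leqnn m)) _.
  case: (leP lo (v m)) => h;
    [case: (leP 0 (hi - v m)) | case: (leP 0 (hi - lo))] => h2; lra.
elim=> [|k IH] km; first by rewrite big_ord0 le_max lexx.
rewrite big_mkcond big_ord_recr /= -big_mkcond /=.
have IH' := IH (ltnW km); have vk := mono k km.
move: IH'; case: ifP => [/andP [c1 c2]|/negbT c].
  have h1 : lo <= v k by apply: le_trans c1 vk.
  rewrite (max_r h1) (max_r c1).
  by case: (leP 0 (hi - v k)) => h3; case: (leP 0 (hi - v k.+1)) => h4; lra.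
rewrite addr0 => IH'; apply: le_trans IH' _; apply: le_max2 => //; rewrite lerD2l lerN2.
by apply: le_max2.
Qed.

Lemma cs_sum m (g : 'I_m -> R) :
  (\sum_(i < m) g i) ^+ 2 <= m%:R * \sum_(i < m) g i ^+ 2.
Proof.
case: m g => [|m] g; first by rewrite !big_ord0 expr0n /= mul0r.
set S := \sum_(i < _) g i; set T := \sum_(i < _) g i ^+ 2.
have h : 0 <= \sum_(i < m.+1) (m.+1%:R * g i - S) ^+ 2 by apply: sumr_ge0 => i _; exact: sqr_ge0.
have e : \sum_(i < m.+1) (m.+1%:R * g i - S) ^+ 2 =
   m.+1%:R ^+ 2 * T - 2 * m.+1%:R * S * S + S ^+ 2 * m.+1%:R.
  rewrite (eq_bigr (fun i => m.+1%:R ^+ 2 * g i ^+ 2 - 2 * m.+1%:R * S * g i + S ^+ 2)); last by move=> i _; ring.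
  rewrite big_split sumrB -!mulr_sumr sumr_const card_ord /= -/S -/T -[S *+ _]mulr_natr; ring.
rewrite e in h.
have m0 : (0 : R) < m.+1%:R by rewrite ltr0n.
have : 0 <= m.+1%:R * (m.+1%:R * T - S ^+ 2) by move: h; congr (_ <= _); ring.
by rewrite pmulr_rge0 // subr_ge0.
Qed.
Section Basic.
Variable Q : nat.
Hypothesis Q1 : (1 <= Q)%N.

Let Qpos : 0 < (Q%:R : R).
Proof. by rewrite ltr0n. Qed.

Definition grid (v : R) := exists z : int, v = z%:~R / Q%:R.

Lemma rdown_le y : rdown Q y <= y.
Proof.
rewrite /rdown ler_pdivrMr //; rewrite mulrC; exact: floor_le.
Qed.

Lemma rdown_gt y : y - Q%:R^-1 < rdown Q y.
Proof.
rewrite /rdown ltr_pdivlMr // mulrBl mulVf ?gt_eqF // mulrC ltrBlDr.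
by have := floorD1_gt (Q%:R * y); rewrite intrD.
Qed.

Lemma rdown_grid y : grid (rdown Q y).
Proof. by exists (Num.floor (Q%:R * y)). Qed.

Lemma rdown_id v : grid v -> rdown Q v = v.
Proof.
move=> [z ->]; rewrite /rdown [Q%:R * _]mulrC divfK ?gt_eqF // intrKfloor //.
Qed.

Lemma rdown_mono y1 y2 : y1 <= y2 -> rdown Q y1 <= rdown Q y2.
Proof.
move=> h; rewrite /rdown ler_pM2r ?invr_gt0 // ler_int le_floor //.
by rewrite ler_pM2l.
Qed.

Lemma rdown_ge c y : grid c -> c <= y -> c <= rdown Q y.
Proof. by move=> g h; rewrite -{1}(@rdown_id c g); apply: rdown_mono. Qed.

Lemma grid_sub u v : grid u -> grid v -> exists z : int, u - v = z%:~R / Q%:R.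
Proof. by move=> [a ->] [b ->]; exists (a - b); rewrite intrB mulrBl. Qed.

Lemma grid_lt u v : grid u -> grid v -> u < v -> u + Q%:R^-1 <= v.
Proof.
move=> gu gv h; have [z hz] := @grid_sub v u gv gu.
have : 0 < z%:~R / (Q%:R : R) by rewrite -hz subr_gt0.
rewrite pmulr_lgt0 ?invr_gt0 // ltr0z => z0.
have : 1 <= z by [].
rewrite -(ler_int R) => h1.
have : 1 / (Q%:R:R) <= z%:~R / Q%:R by rewrite ler_pM2r ?invr_gt0.
rewrite -hz; lra.
Qed.

Variable n' : nat.
Local Notation n := n'.+1.
Variable A : nat -> 'M[R]_n.
Variable x : nat -> 'I_n -> R.
Variable eta : R.
Variable B : nat.
Hypothesis eta0 : 0 < eta.
Hypothesis grid0 : forall i, grid (x 0%N i).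
Hypothesis dyn : forall k i, x k.+1 i = rdown Q (\sum_(j < n) A k i j * x k j).
Hypothesis ds : forall k, doubly_stochastic (A k).
Hypothesis diag : forall k i, 0 < A k i i.
Hypothesis etab : forall k i j, 0 < A k i j -> eta <= A k i j.

Definition y k i := \sum_(j < n) A k i j * x k j.

Lemma A_ge0 k i j : 0 <= A k i j.
Proof. by case: (ds k) => h _. Qed.
Lemma rowsum k i : \sum_(j < n) A k i j = 1.
Proof. by case: (ds k) => _ []. Qed.
Lemma colsum k j : \sum_(i < n) A k i j = 1.
Proof. by case: (ds k) => _ []. Qed.

Lemma gridx k i : grid (x k i).
Proof. by case: k => [|k]; [exact: grid0 | rewrite dyn; exact: rdown_grid]. Qed.

Lemma y_ge k c i : (forall j, c <= x k j) -> c <= y k i.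
Proof.
move=> h; rewrite /y.
apply: le_trans (_ : \sum_(j < n) A k i j * c <= _).
  by rewrite -mulr_suml rowsum mul1r.
by apply: ler_sum => j _; apply: ler_wpM2l; [exact: A_ge0 | exact: h].
Qed.

Lemma y_le k c i : (forall j, x k j <= c) -> y k i <= c.
Proof.
move=> h; rewrite /y.
apply: (@le_trans _ _ (\sum_(j < n) A k i j * c)).
  by apply: ler_sum => j _; apply: ler_wpM2l; [exact: A_ge0 | exact: h].
by rewrite -mulr_suml rowsum mul1r.
Qed.

Lemma lowb k c : grid c -> (forall i, c <= x k i) -> forall i, c <= x k.+1 i.
Proof. by move=> g h i; rewrite dyn; apply: rdown_ge => //; exact: y_ge. Qed.

Lemma upb k c : (forall i, x k i <= c) -> forall i, x k.+1 i <= c.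
Proof. move=> h i; rewrite dyn; apply: le_trans; first exact: rdown_le. exact: y_le. Qed.

Lemma lowb_iter t0 c : grid c -> (forall i, c <= x t0 i) ->
  forall d i, c <= x (t0 + d) i.
Proof.
move=> g h; elim=> [|d IH] i; first by rewrite addn0.
by rewrite addnS; apply: lowb.
Qed.

Lemma sumy k : \sum_(i < n) y k i = \sum_(j < n) x k j.
Proof.
rewrite /y exchange_big /=; apply: eq_bigr => j _.
by rewrite -mulr_suml colsum mul1r.
Qed.

Lemma sum_step k : \sum_(i < n) x k.+1 i <= \sum_(i < n) x k i /\
   \sum_(i < n) x k i - n%:R / Q%:R <= \sum_(i < n) x k.+1 i.
Proof.
rewrite -(sumy k); split.
  by apply: ler_sum => i _; rewrite dyn; exact: rdown_le.
have -> : (n%:R : R) / Q%:R = \sum_(i < n) Q%:R^-1.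
  by rewrite sumr_const card_ord -[Q%:R^-1 *+ n]mulr_natl.
rewrite -sumrB; apply: ler_sum => i _.
by rewrite dyn; apply: ltW; exact: rdown_gt.
Qed.

Definition F c k := \sum_(i < n) (x k i - c) ^+ 2.
Definition Drow k i := \sum_(j < n) A k i j * (x k j - y k i) ^+ 2.
Definition D k := \sum_(i < n) Drow k i.

Lemma Drow_ge0 k i : 0 <= Drow k i.
Proof. by apply: sumr_ge0 => j _; apply: mulr_ge0; [exact: A_ge0 | exact: sqr_ge0]. Qed.

Lemma yc_id k c i :
  (y k i - c) ^+ 2 = \sum_(j < n) A k i j * (x k j - c) ^+ 2 - Drow k i.
Proof.
rewrite /Drow -sumrB.
have -> : \sum_(j < n) (A k i j * (x k j - c) ^+ 2 - A k i j * (x k j - y k i) ^+ 2)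
   = \sum_(j < n) ((y k i - c) * (2 * (A k i j * x k j)) - (y k i - c) * ((c + y k i) * A k i j)).
  by apply: eq_bigr => j _; ring.
rewrite sumrB -!mulr_sumr rowsum -/(y k i); ring.
Qed.

Lemma F_step k c : (forall i, c <= x k.+1 i) -> F c k.+1 <= F c k - D k.
Proof.
move=> h.
apply: (@le_trans _ _ (\sum_(i < n) (y k i - c) ^+ 2)).
  apply: ler_sum => i _.
  have hx := h i; have hxy : x k.+1 i <= y k i by rewrite dyn; exact: rdown_le.
  by apply: lerXn2r; rewrite ?nnegrE; lra.
under eq_bigr do rewrite yc_id.
rewrite sumrB exchange_big /= /F /D; apply: lerB => //.
rewrite le_eqVlt; apply/orP; left; apply/eqP; apply: eq_bigr => j _; by rewrite -mulr_suml colsum mul1r.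
Qed.

Lemma Drow_ge k i j1 j2 : 0 < A k i j1 -> 0 < A k i j2 ->
  eta / 2 * (x k j1 - x k j2) ^+ 2 <= Drow k i.
Proof.
move=> h1 h2; have [<-|ne] := eqVneq j1 j2.
  by rewrite subrr expr0n /= mulr0; exact: Drow_ge0.
rewrite /Drow (bigD1 j1) //= (bigD1 j2) /=; last by rewrite eq_sym.
set r := \sum_(j < n | _) _.
have r0 : 0 <= r by apply: sumr_ge0 => j _; apply: mulr_ge0; [exact: A_ge0 | exact: sqr_ge0].
have e1 := etab k i j1 h1; have e2 := etab k i j2 h2.
set a := x k j1 - y k i; set b := x k j2 - y k i.
have -> : x k j1 - x k j2 = a - b by rewrite /a /b; ring.
have ha : eta * a ^+ 2 <= A k i j1 * a ^+ 2 by apply: ler_wpM2r => //; exact: sqr_ge0.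
have hb : eta * b ^+ 2 <= A k i j2 * b ^+ 2 by apply: ler_wpM2r => //; exact: sqr_ge0.
have : 0 <= eta * (a + b) ^+ 2 by apply: mulr_ge0; [exact: ltW | exact: sqr_ge0].
nra.
Qed.

Lemma A_cases k i j : A k i j = 0 \/ 0 < A k i j.
Proof. by have := A_ge0 k i j; rewrite le_eqVlt => /orP [/eqP <-|->]; [left|right]. Qed.

Lemma y_ge_nb k c i : (forall j, 0 < A k i j -> c <= x k j) -> c <= y k i.
Proof.
move=> h; rewrite /y.
apply: (@le_trans _ _ (\sum_(j < n) A k i j * c)).
  by rewrite -mulr_suml rowsum mul1r.
apply: ler_sum => j _; case: (A_cases k i j) => [->|hp]; first by rewrite !mul0r.
by apply: ler_wpM2l; [exact: A_ge0 | exact: h].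
Qed.

Lemma y_le_nb k c i : (forall j, 0 < A k i j -> x k j <= c) -> y k i <= c.
Proof.
move=> h; rewrite /y.
apply: (@le_trans _ _ (\sum_(j < n) A k i j * c)); last first.
  by rewrite -mulr_suml rowsum mul1r.
apply: ler_sum => j _; case: (A_cases k i j) => [->|hp]; first by rewrite !mul0r.
by apply: ler_wpM2l; [exact: A_ge0 | exact: h].
Qed.

Lemma F_iter t0 c : grid c -> (forall i, c <= x t0 i) ->
  forall d, F c (t0 + d) <= F c t0 - \sum_(u < d) D (t0 + u).
Proof.
move=> g h; elim=> [|d IH]; first by rewrite addn0 big_ord0 subr0.
rewrite big_ord_recr /= addnS.
have hs : forall i, c <= x (t0 + d).+1 i by move=> i; rewrite -addnS; exact: lowb_iter.
have := @F_step (t0 + d) c hs; lra.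
Qed.

Section Window.
Variable t0 : nat.
Variable s : {perm 'I_n}.
Hypothesis srt : forall a b : 'I_n, (a <= b)%N -> x t0 (s b) <= x t0 (s a).
Hypothesis cutH : forall a b : 'I_n, nat_of_ord b = a.+1 ->
  x t0 (s a) = x t0 (s b) \/
  exists t : nat, [/\ (t0 <= t)%N, (t < t0 + B)%N &
    exists p q : 'I_n, [/\ (p <= a)%N, (b <= q)%N &
      in_edges (A t) (s p) (s q) \/ in_edges (A t) (s q) (s p)]].

Definition v (a : nat) := x t0 (s (inord a)).
Definition sep (a : nat) (p q : 'I_n) := (p <= a)%N != (q <= a)%N.
Definition rowcross t (p : 'I_n) a := [exists q : 'I_n, (0 < A t (s p) (s q)) && sep a p q].
Definition cross t a := [exists p : 'I_n, rowcross t p a].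

Lemma v_mono k : (k < n')%N -> v k.+1 <= v k.
Proof.
move=> h; apply: srt; rewrite !inordK //; exact: ltnW.
Qed.

Lemma contain a d : (a < n')%N ->
  (forall d', (d' < d)%N -> ~~ cross (t0 + d') a) ->
  forall p : 'I_n, ((p <= a)%N -> v a <= x (t0 + d) (s p)) /\
                   ((a < p)%N -> x (t0 + d) (s p) <= v a.+1).
Proof.
move=> ha; elim: d => [|d IH] hd p.
  rewrite addn0; split => hp; apply: srt; rewrite inordK //; exact: ltnW.
have IH' := IH (fun d' h => hd d' (ltnW h)).
have nc := hd d (ltnSn d).
have nb : forall q : 'I_n, 0 < A (t0 + d) (s p) (s q) -> (p <= a)%N = (q <= a)%N.
  move=> q hq.
  have : ~~ sep a p q.
    apply: (contra _ nc) => hs.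
    by apply/existsP; exists p; apply/existsP; exists q; rewrite hq.
  by rewrite /sep negbK => /eqP.
rewrite addnS dyn; split => hp.
  apply: rdown_ge; first exact: gridx.
  apply: y_ge_nb => j hj; rewrite -(permKV s j) in hj *.
  by apply: (IH' _).1; rewrite -(nb _ hj).
apply: le_trans; first exact: rdown_le.
apply: y_le_nb => j hj; rewrite -(permKV s j) in hj *.
apply: (IH' _).2; have := nb _ hj; rewrite leqNgt hp /= => /esym.
by rewrite leqNgt => /negbFE.
Qed.

Definition noearlier (u : nat) a := [forall u' : 'I_B, (u' < u)%N ==> ~~ cross (t0 + u') a].
Definition cov (u : 'I_B) p a := rowcross (t0 + u) p a && noearlier u a.

Lemma cov_bounds (u : 'I_B) p (a : nat) : (a < n')%N -> cov u p a ->
  exists j1 j2, [/\ 0 < A (t0 + u) (s p) j1, 0 < A (t0 + u) (s p) j2,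
     v a <= x (t0 + u) j1 & x (t0 + u) j2 <= v a.+1].
Proof.
move=> ha /andP [/existsP [q /andP [hq hs]] /forallP ne].
have hc : forall d', (d' < u)%N -> ~~ cross (t0 + d') a.
  move=> d' hd; have hdB : (d' < B)%N by apply: ltn_trans hd (ltn_ord u).
  by have := ne (Ordinal hdB); rewrite /= hd.
have C := @contain a u ha hc.
move: hs; rewrite /sep; case: (leqP p a) => hp; case: (leqP q a) => hq' //= _.
  by exists (s p), (s q); split; [exact: diag | done | apply: (C p).1 | apply: (C q).2].
by exists (s q), (s p); split; [done | exact: diag | apply: (C q).1 | apply: (C p).2].
Qed.

Lemma row_cov (u : 'I_B) p :
  \sum_(a < n' | cov u p a) (v a - v a.+1) ^+ 2 <= 2 / eta * Drow (t0 + u) (s p).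
Proof.
set tau := (t0 + u)%N; set i := s p.
have Pi : 0 < A tau i i by exact: diag.
case: (@arg_maxP _ _ _ i (fun j => 0 < A tau i j) (fun j => x tau j) Pi) => j1 nb1 max1.
case: (@arg_minP _ _ _ i (fun j => 0 < A tau i j) (fun j => x tau j) Pi) => j2 nb2 min2.
set hi := x tau j1; set lo := x tau j2.
have hilo : lo <= hi by apply: le_trans (min2 _ Pi) (max1 _ Pi).
have hD := @Drow_ge tau i j1 j2 nb1 nb2; rewrite -/hi -/lo in hD.
apply: (@le_trans _ _ ((hi - lo) ^+ 2)); last first.
  have e : (hi - lo) ^+ 2 = 2 / eta * (eta / 2 * (hi - lo) ^+ 2).
    by field; rewrite gt_eqF.
  rewrite e; apply: ler_wpM2l => //; apply: divr_ge0 => //; exact: ltW.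
have gb : forall a : 'I_n', cov u p a -> (lo <= v a.+1) && (v a <= hi).
  move=> a ca; case: (@cov_bounds u p a (ltn_ord a) ca) => k1 [k2 [n1 n2 h1 h2]].
  apply/andP; split; [apply: le_trans (min2 _ n2) h2 | apply: le_trans h1 (max1 _ n1)].
apply: (@le_trans _ _ (\sum_(a < n' | cov u p a) (hi - lo) * (v a - v a.+1))).
  apply: ler_sum => a ca; have /andP [g1 g2] := gb a ca.
  have := @v_mono a (ltn_ord a); rewrite expr2; move=> vm.
  by apply: ler_wpM2r; lra.
rewrite -mulr_sumr expr2; apply: ler_wpM2l; first lra.
apply: le_trans (@tele_bound n' v lo hi v_mono hilo).
rewrite [X in _ <= X]big_mkcond [X in X <= _]big_mkcond; apply: ler_sum => a _.
case: ifP => ca; first by rewrite gb.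
by case: ifP => // _; have := @v_mono a (ltn_ord a); lra.
Qed.

Lemma cov_exists (a : 'I_n') : v a != v a.+1 -> exists u : 'I_B, exists p, cov u p a.
Proof.
move=> ne.
have ha : (a < n)%N by apply: ltn_trans (ltn_ord a) _.
have ha1 : (a.+1 < n)%N by rewrite ltnS.
have hb : nat_of_ord (inord a.+1 : 'I_n) = (inord a : 'I_n).+1 by rewrite !inordK.
have := @cutH (inord a) (inord a.+1) hb.
case=> [e | [t [h1 h2 [p [q [hp hq he]]]]]]; first by rewrite /v e eqxx in ne.
rewrite inordK // in hp; rewrite inordK // in hq.
have cr : cross t a.
  have hq' : (q <= a)%N = false by apply/negbTE; rewrite -ltnNge.
  case: he => he; apply/existsP.
    by exists q; apply/existsP; exists p; rewrite he /sep hq' hp.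
  by exists p; apply/existsP; exists q; rewrite he /sep hq' hp.
have exP : exists u, (u < B)%N && cross (t0 + u) a.
  exists (t - t0)%N; rewrite subnKC // cr andbT.
  by rewrite ltn_subLR.
case: (ex_minnP exP) => m /andP [hmB hmc] hmin.
case/existsP: hmc => p0 hp0.
exists (Ordinal hmB), p0; rewrite /cov hp0 /=.
apply/forallP => u'; apply/implyP => hu'; apply/negP => hc.
have := hmin u'; rewrite (ltn_ord u') hc => /(_ isT); rewrite leqNgt hu'.
by [].
Qed.

Lemma sum_cov : \sum_(a < n') (v a - v a.+1) ^+ 2 <=
  \sum_(u < B) \sum_(p < n) \sum_(a < n' | cov u p a) (v a - v a.+1) ^+ 2.
Proof.
set G := fun (u : 'I_B) (p : 'I_n) (a : 'I_n') =>
  if cov u p a then (v a - v a.+1) ^+ 2 else 0.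
have -> : \sum_(u < B) \sum_(p < n) \sum_(a < n' | cov u p a) (v a - v a.+1) ^+ 2
   = \sum_(a < n') \sum_(u < B) \sum_(p < n) G u p a.
  rewrite (eq_bigr (fun u => \sum_(p < n) \sum_(a < n') G u p a)); last first.
    by move=> u _; apply: eq_bigr => p _; rewrite big_mkcond.
  rewrite (eq_bigr (fun u => \sum_(a < n') \sum_(p < n) G u p a)); last first.
    by move=> u _; rewrite exchange_big.
  by rewrite exchange_big.
apply: ler_sum => a _ /=; rewrite /G.
have pos : forall u p, 0 <= (if cov u p a then (v a - v a.+1) ^+ 2 else 0).
  by move=> u p; case: ifP => _ //; exact: sqr_ge0.
have [e|ne] := eqVneq (v a) (v a.+1).
  have z : (v a - v a.+1) ^+ 2 = 0 by rewrite e subrr expr0n.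
  by rewrite z; apply: sumr_ge0 => u _; apply: sumr_ge0 => p _; case: ifP.
case: (@cov_exists a ne) => u [p c].
rewrite (bigD1 u) //= (bigD1 p) //= c.
have r1 : 0 <= \sum_(p0 < n | p0 != p) (if cov u p0 a then (v a - v a.+1) ^+ 2 else 0).
  by apply: sumr_ge0 => q _; exact: pos.
have r2 : 0 <= \sum_(u0 < B | u0 != u) \sum_(p0 < n) (if cov u0 p0 a then (v a - v a.+1) ^+ 2 else 0).
  by apply: sumr_ge0 => q _; apply: sumr_ge0 => r _; exact: pos.
lra.
Qed.

Lemma window_sum :
  eta / 2 * \sum_(a < n') (v a - v a.+1) ^+ 2 <= \sum_(u < B) D (t0 + u).
Proof.
apply: (@le_trans _ _ (eta / 2 * \sum_(u < B) \sum_(p < n) (2 / eta * Drow (t0 + u) (s p)))).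
  apply: ler_wpM2l; first by apply: divr_ge0 => //; exact: ltW.
  apply: le_trans sum_cov _; apply: ler_sum => u _; apply: ler_sum => p _.
  exact: row_cov.
rewrite mulr_sumr; apply: ler_sum => u _; rewrite mulr_sumr /D.
rewrite [X in _ <= X](reindex_inj (@perm_inj _ s)) /=; apply: ler_sum => p _.
have e1 : eta / 2 * (2 / eta) = 1 by field; rewrite gt_eqF.
by rewrite mulrA e1 mul1r.
Qed.

Lemma tele_v m : \sum_(a < m) (v a - v a.+1) = v 0 - v m.
Proof.
elim: m => [|m IH]; first by rewrite big_ord0 subrr.
by rewrite big_ord_recr /= IH; ring.
Qed.

Lemma window_main : F (v n') (t0 + B) <= (1 - eta / (2 * n%:R ^+ 2)) * F (v n') t0.
Proof.
set c := v n'.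
have hin : forall i, c <= x t0 i /\ x t0 i <= v 0.
  move=> i; rewrite -(permKV s i); split; apply: srt; rewrite inordK //.
  by rewrite -ltnS.
have g : grid c by exact: gridx.
have hF := @F_iter t0 c g (fun i => (hin i).1) B.
have hW := window_sum.
set S2 := \sum_(a < n') (v a - v a.+1) ^+ 2 in hW.
set Rg := v 0 - c.
have cs := @cs_sum n' (fun a : 'I_n' => v a - v a.+1); rewrite /= tele_v -/c -/Rg -/S2 in cs.
have S20 : 0 <= S2 by apply: sumr_ge0 => a _; exact: sqr_ge0.
have hFt : F c t0 <= n%:R * Rg ^+ 2.
  rewrite /F; apply: (@le_trans _ _ (\sum_(i < n) Rg ^+ 2)).
    apply: ler_sum => i _; have [h1 h2] := hin i.
    by apply: lerXn2r; rewrite ?nnegrE /Rg; lra.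
  by rewrite sumr_const card_ord mulr_natl.
have nn : (n'%:R : R) <= n%:R by rewrite ler_nat.
have n0 : (0 : R) < n%:R by rewrite ltr0n.
have hF2 : F c t0 <= n%:R ^+ 2 * S2.
  apply: le_trans hFt _; rewrite expr2 -mulrA; apply: ler_wpM2l; first exact: ltW.
  apply: le_trans cs _; by apply: ler_wpM2r.
have : eta / (2 * n%:R ^+ 2) * F c t0 <= eta / 2 * S2.
  apply: (@le_trans _ _ (eta / (2 * n%:R ^+ 2) * (n%:R ^+ 2 * S2))).
    apply: ler_wpM2l => //; apply: divr_ge0; [exact: ltW | ].
    by apply: mulr_ge0 => //; exact: sqr_ge0.
  apply: eqle; field; rewrite gt_eqF //.
move=> h2; move: hF; rewrite -/c; set E := eta / (2 * n%:R ^+ 2) in h2 *; set Fc := F c t0 in h2 *; nra.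
Qed.
End Window.

Hypothesis B1 : (1 <= B)%N.
Hypothesis hii : forall (k : nat) (s : {perm 'I_n}),
       (forall a b : 'I_n, (a <= b)%N -> x (k * B)%N (s b) <= x (k * B)%N (s a)) ->
       forall a b : 'I_n, nat_of_ord b = a.+1 ->
         x (k * B)%N (s a) = x (k * B)%N (s b) \/
         exists t : nat, [/\ (k * B <= t)%N, (t < k.+1 * B)%N &
           exists p q : 'I_n, [/\ (p <= a)%N, (b <= q)%N &
             in_edges (A t) (s p) (s q) \/ in_edges (A t) (s q) (s p)]].

Definition jmin t := Order.arg_min (ord0 : 'I_n) (fun _ => true) (x t).
Definition mval t := x t (jmin t).

Lemma mval_le t i : mval t <= x t i.
Proof.
rewrite /mval /jmin.
by case: (@arg_minP _ _ _ (ord0 : 'I_n) (fun _ => true) (x t) isT) => j _ h; apply: h.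
Qed.

Definition Phi k := F (mval (k * B)%N) (k * B)%N.

Lemma F_mono c1 c2 t : c1 <= c2 -> (forall i, c2 <= x t i) -> F c2 t <= F c1 t.
Proof.
move=> h12 h; apply: ler_sum => i _; have := h i => hi.
by apply: lerXn2r; rewrite ?nnegrE; lra.
Qed.

Definition alpha := eta / (2 * n%:R ^+ 2).

Lemma Phi_step k : Phi k.+1 <= (1 - alpha) * Phi k.
Proof.
set t0 := (k * B)%N.
have [s srt] := @sort_perm n (x t0).
have cutH := @hii k s srt.
rewrite mulSn addnC -/t0 in cutH.
have W := @window_main t0 s srt cutH.
have e : v t0 s n' = mval t0.
  apply: le_anti; rewrite mval_le andbT.
  rewrite /v /mval -(permKV s (jmin t0)); apply: srt; rewrite inordK //; by rewrite -ltnS.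
rewrite e in W.
rewrite /Phi -/t0 mulSn addnC -/t0.
apply: le_trans W.
apply: F_mono; last exact: mval_le.
have g : grid (mval t0) by exact: gridx.
by have := @lowb_iter t0 (mval t0) g (mval_le t0) B (jmin (t0 + B)).
Qed.

Lemma eta_le1 : eta <= 1.
Proof.
have h := etab 0%N (ord0 : 'I_n) ord0 (diag 0%N ord0).
apply: le_trans h _; rewrite -(rowsum 0%N ord0) (bigD1 ord0) //= lerDl.
by apply: sumr_ge0 => j _; exact: A_ge0.
Qed.

Lemma alpha_gt0 : 0 < alpha.
Proof. by rewrite /alpha divr_gt0 // mulr_gt0 // exprn_gt0 // ltr0n. Qed.

Lemma alpha_le1 : alpha <= 1.
Proof.
rewrite /alpha ler_pdivrMr ?mulr_gt0 ?exprn_gt0 ?ltr0n // mul1r.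
have h1 : (1 : R) <= n%:R ^+ 2 by rewrite exprn_ege1 // ler1n.
have := eta_le1; lra.
Qed.

Lemma Phi_ge0 k : 0 <= Phi k.
Proof. by apply: sumr_ge0 => i _; exact: sqr_ge0. Qed.

Lemma Phi_iter k : Phi k <= (1 - alpha) ^+ k * Phi 0.
Proof.
elim: k => [|k IH]; first by rewrite expr0 mul1r.
apply: le_trans (Phi_step k) _; rewrite exprS -mulrA.
apply: ler_wpM2l => //; have := alpha_le1; lra.
Qed.

Lemma consensus k : Phi k < Q%:R^-1 ^+ 2 -> forall i, x (k * B)%N i = mval (k * B)%N.
Proof.
move=> hP i; set t := (k * B)%N.
have hm := mval_le t i.
rewrite le_eqVlt in hm; case/orP: hm => [/eqP -> //| hlt].
have := @grid_lt (mval t) (x t i) (gridx _ _) (gridx _ _) hlt => h.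
have : (x t i - mval t) ^+ 2 <= Phi k.
  rewrite /Phi -/t /F (bigD1 i) //= lerDl.
  by apply: sumr_ge0 => j _; exact: sqr_ge0.
have q0 : 0 < (Q%:R : R)^-1 by rewrite invr_gt0.
have : Q%:R^-1 ^+ 2 <= (x t i - mval t) ^+ 2.
  by apply: lerXn2r; rewrite ?nnegrE; lra.
lra.
Qed.

Lemma const_from t w : (forall i, x t i = w) -> forall d i, x (t + d)%N i = w.
Proof.
move=> h; elim=> [|d IH] i; first by rewrite addn0.
rewrite addnS dyn.
have -> : \sum_(j < n) A (t + d)%N i j * x (t + d)%N j = w.
  by under eq_bigr do rewrite IH; rewrite -mulr_suml rowsum mul1r.
by rewrite -(h ord0); apply: rdown_id; exact: gridx.
Qed.

Lemma sum_iter d : \sum_(i < n) x d i <= \sum_(i < n) x 0%N i /\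
  \sum_(i < n) x 0%N i - d%:R * (n%:R / Q%:R) <= \sum_(i < n) x d i.
Proof.
elim: d => [|d [IH1 IH2]]; first by rewrite mul0r subr0.
have [h1 h2] := sum_step d; split; first by apply: le_trans h1 IH1.
rewrite -natr1 mulrDl mul1r; lra.
Qed.

Lemma abs_helper (nn S w t q : R) : 0 < nn -> 0 < q -> 0 <= t ->
  nn * w <= S -> S - t * (nn / q) <= nn * w -> `|w - S / nn| <= t / q.
Proof.
move=> n0 q0 t0 h1 h2.
have e : w - S / nn = (nn * w - S) / nn by field; rewrite gt_eqF.
rewrite e ler_norml; apply/andP; split.
  rewrite ler_pdivlMr // .
  have -> : - (t / q) * nn = - (t * (nn / q)) by ring.
  lra.
rewrite ler_pdivrMr //; have : 0 <= t / q * nn by apply: mulr_ge0; [apply: divr_ge0; [exact: t0 | exact: ltW] | exact: ltW].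
lra.
Qed.

Lemma ln_ge_half (z : R) : 2 <= z -> 1 / 2 <= ln z.
Proof.
move=> hz; have z0 : 0 < z by lra.
have := expR_ge1Dx (- ln z); rewrite expRN lnK ?posrE //.
have : z^-1 <= 2^-1 by rewrite lef_pV2 ?posrE //; lra.
lra.
Qed.

Lemma main_result (U L : R) :
  (exists i j, x 0%N i != x 0%N j) ->
  (forall i, x 0%N i <= U) -> (exists i, x 0%N i = U) ->
  (forall i, L <= x 0%N i) -> (exists i, x 0%N i = L) ->
  exists xf : R,
    (forall i, (fun k => x k i) @ \oo --> xf) /\
    `| xf - (\sum_(i < n) x 0%N i) / n%:R |
      <= 6 / Q%:R * (n%:R ^+ 2 / eta) * B%:R * ln (Q%:R * n%:R * (U - L)).
Proof.
move=> [i0 [j0 ne]] hU [iU eU] hL [iL eL].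
have n'0 : (0 < n')%N.
  rewrite lt0n; apply/negP => /eqP e; move: ne; suff -> : i0 = j0 by rewrite eqxx.
  have h1 : (nat_of_ord i0 <= n')%N by rewrite -ltnS.
  have h2 : (nat_of_ord j0 <= n')%N by rewrite -ltnS.
  have h1' : (nat_of_ord i0 <= 0)%N by apply: leq_trans h1 _; rewrite e.
  have h2' : (nat_of_ord j0 <= 0)%N by apply: leq_trans h2 _; rewrite e.
  apply/val_inj => /=; move: h1' h2'; rewrite !leqn0 => /eqP a1 /eqP a2; by rewrite a1 a2.
have nR2 : (2 : R) <= n%:R by rewrite (ler_nat R 2 n) ltnS.
have LU : L < U.
  rewrite lt_neqAle (le_trans (hL i0) (hU i0)) andbT; apply/eqP => e.
  have := hL i0; have := hU i0; have := hL j0; have := hU j0; rewrite e => a1 a2 a3 a4.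
  have : x 0%N i0 = x 0%N j0 by lra.
  by move/eqP; rewrite (negbTE ne).
have gL : grid L by rewrite -eL; exact: gridx.
have gU : grid U by rewrite -eU; exact: gridx.
have hUL := @grid_lt L U gL gU LU.
set Dd := Q%:R * (U - L).
have D1 : 1 <= Dd.
  have : Q%:R * Q%:R^-1 <= Q%:R * (U - L) by apply: ler_wpM2l; [exact: ltW | lra].
  by rewrite divff ?gt_eqF.
have m0 : mval 0%N = L.
  by apply: le_anti; rewrite hL andbT -eL; exact: mval_le.
have P0 : Phi 0 <= n%:R * (U - L) ^+ 2.
  rewrite /Phi mul0n m0 /F; apply: (@le_trans _ _ (\sum_(i < n) (U - L) ^+ 2)).
    apply: ler_sum => i _; have := hL i; have := hU i => a1 a2.
    by apply: lerXn2r; rewrite ?nnegrE; lra.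
  by rewrite sumr_const card_ord mulr_natl.
have nD1 : 1 <= n%:R * Dd ^+ 2.
  have : 1 <= Dd ^+ 2 by rewrite exprn_ege1.
  have : (1 : R) <= n%:R by lra.
  nra.
have lnD0 : 0 <= ln (n%:R * Dd ^+ 2) by apply: ln_ge0.
have ha := alpha_gt0.
set X := ln (n%:R * Dd ^+ 2) / alpha.
have X0 : 0 <= X by apply: divr_ge0 => //; exact: ltW.
set K := (Num.truncn X).+1.
have hK : X < K%:R by exact: truncnS_gt.
have hK2 : K%:R <= X + 1.
  by rewrite /K -natr1 lerD2r; case/andP: (truncn_itv X0).
clearbody K.
have ULp : 0 < U - L by lra.
have PK : Phi K < Q%:R^-1 ^+ 2.
  apply: le_lt_trans (Phi_iter K) _.
  have e1 : (1 - alpha) ^+ K <= expR (K%:R * - alpha).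
    rewrite expRM_natl; apply: lerXn2r; rewrite ?nnegrE ?expR_ge0 //.
      by have := alpha_le1; lra.
    by have := expR_ge1Dx (- alpha); lra.
  have e2 : expR (K%:R * - alpha) < (n%:R * Dd ^+ 2)^-1.
    have e : (n%:R * Dd ^+ 2)^-1 = expR (- ln (n%:R * Dd ^+ 2)).
      have pos : n%:R * Dd ^+ 2 \is Num.pos by rewrite posrE; apply: lt_le_trans ltr01 nD1.
      by rewrite expRN (lnK pos).
    rewrite e ltr_expR.
    have : X * alpha < K%:R * alpha by rewrite ltr_pM2r.
    by rewrite /X divfK ?gt_eqF // mulrN ltrN2.
  have e3 : (n%:R * Dd ^+ 2)^-1 * (n%:R * (U - L) ^+ 2) = Q%:R^-1 ^+ 2.
    rewrite /Dd; field; rewrite ?gt_eqF //; apply/andP; split; rewrite gt_eqF //; lra.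
  rewrite -e3.
  have hp : 0 < n%:R * (U - L) ^+ 2 by apply: mulr_gt0; [lra | exact: exprn_gt0].
  apply: (@le_lt_trans _ _ (expR (K%:R * - alpha) * (n%:R * (U - L) ^+ 2))).
    apply: le_trans (_ : (1 - alpha) ^+ K * (n%:R * (U - L) ^+ 2) <= _).
      by apply: ler_wpM2l => //; apply: exprn_ge0; have := alpha_le1; lra.
    by apply: ler_wpM2r => //; exact: ltW.
  by rewrite ltr_pM2r.
set T := (K * B)%N.
have hc := @consensus K PK; rewrite -/T in hc.
set w := mval T in hc.
exists w; split.
  move=> i; apply: cvg_near_cst; apply: filterS (nbhs_infty_ge T) => k hk.
  by rewrite -(subnKC hk); exact: (@const_from T w hc (k - T)%N i).
have [s1 s2] := sum_iter T.
have eS : \sum_(i < n) x T i = n%:R * w.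
  by under eq_bigr do rewrite hc; rewrite sumr_const card_ord mulr_natl.
rewrite eS in s1 s2.
have n0 : (0 : R) < n%:R by rewrite ltr0n.
have AH := @abs_helper _ _ _ _ _ n0 Qpos (ler0n _ T) s1 s2; apply: le_trans AH _.
set L1 := ln (Q%:R * n%:R * (U - L)).
have eL1 : L1 = ln (n%:R * Dd) by rewrite /L1 /Dd; congr ln; ring.
have nDpos : n%:R * Dd \is Num.pos by rewrite posrE; apply: mulr_gt0 => //; apply: lt_le_trans ltr01 D1.
have Dpos : Dd \is Num.pos by rewrite posrE; apply: lt_le_trans ltr01 D1.
have hln2 : ln (n%:R * Dd ^+ 2) <= 2 * L1.
  rewrite eL1 expr2 mulrA lnM //.
  have : ln Dd <= ln (n%:R * Dd).
    rewrite ler_ln //; rewrite -{1}(mul1r Dd); apply: ler_wpM2r; [apply: le_trans ler01 D1 | lra].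
  lra.
have L1h : 1 / 2 <= L1.
  rewrite eL1; apply: ln_ge_half.
  have : n%:R * 1 <= n%:R * Dd by apply: ler_wpM2l => //; exact: ltW.
  lra.
set N2 := n%:R ^+ 2 / eta.
have N21 : 1 <= N2.
  rewrite /N2 ler_pdivlMr // mul1r; apply: le_trans eta_le1 _.
  by rewrite exprn_ege1 //; lra.
have eX : X = ln (n%:R * Dd ^+ 2) * (2 * N2).
  by rewrite /X /alpha /N2; field; rewrite !gt_eqF //.
clearbody X N2 L1 Dd.
have N20 : 0 <= 2 * N2 by lra.
have hX : X <= 2 * L1 * (2 * N2) by rewrite eX; apply: ler_wpM2r.
have h1 : 1 / 2 * 1 <= L1 * N2 by apply: ler_pM => //; lra.
have hK3 : K%:R <= 6 * N2 * L1 by nra.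
rewrite /T natrM.
apply: (@le_trans _ _ (6 * N2 * L1 * (B%:R / Q%:R))).
  rewrite -[K%:R * B%:R / Q%:R]mulrA; apply: ler_wpM2r; last exact: hK3.
  apply: divr_ge0; [exact: ler0n | exact: ltW].
apply: eqle; ring.
Qed.
End Basic.


Theorem proposition7 :
  exists c : R,
  forall (n : nat) (eta : R) (B Q : nat) (A : nat -> 'M[R]_n)
         (x : nat -> 'I_n -> R) (U L : R),
    0 < eta -> (1 <= B)%N -> (1 <= Q)%N ->
    (* initial condition: multiples of 1/Q, not all equal *)
    (forall i, exists z : int, x 0%N i = z%:~R / Q%:R) ->
    (exists i j, x 0%N i != x 0%N j) ->
    (* quantized dynamics *)
    (forall k i, x k.+1 i = rdown Q (\sum_(j < n) A k i j * x k j)) ->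
    (* (i) *)
    (forall k, doubly_stochastic (A k)) ->
    (forall k i, 0 < A k i i) ->
    (forall k i j, 0 < A k i j -> eta <= A k i j) ->
    (* (ii): s is sigma (0-indexed), a = d-1, a.+1 = d *)
    (forall (k : nat) (s : {perm 'I_n}),
       (forall a b : 'I_n, (a <= b)%N -> x (k * B)%N (s b) <= x (k * B)%N (s a)) ->
       forall a b : 'I_n, nat_of_ord b = a.+1 ->
         x (k * B)%N (s a) = x (k * B)%N (s b) \/
         exists t : nat, [/\ (k * B <= t)%N, (t < k.+1 * B)%N &
           exists p q : 'I_n, [/\ (p <= a)%N, (b <= q)%N &
             in_edges (A t) (s p) (s q) \/ in_edges (A t) (s q) (s p)]]) ->
    (* U, L: max and min of x(0) *)
    (forall i, x 0%N i <= U) -> (exists i, x 0%N i = U) ->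
    (forall i, L <= x 0%N i) -> (exists i, x 0%N i = L) ->
    exists xf : R,
      (forall i, (fun k => x k i) @ \oo --> xf) /\
      `| xf - (\sum_(i < n) x 0%N i) / n%:R |
        <= c / Q%:R * (n%:R ^+ 2 / eta) * B%:R * ln (Q%:R * n%:R * (U - L)).
Proof.
exists 6 => n eta B Q A x U L eta0 B1 Q1 g0 ne dyn ds diag etab hii hU eU hL eL.
case: n A x g0 ne dyn ds diag etab hii hU eU hL eL => [|n'] A x g0 ne dyn ds diag etab hii hU eU hL eL.
  by case: ne => [[]].
exact: (@main_result Q Q1 n' A x eta B eta0 g0 dyn ds diag etab hii U L ne hU eU hL eL).
Qed.
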